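(* Let $n,m\in\mathbb{N}$ and let $(\boldsymbol{d},\boldsymbol{k})$, with $\boldsymbol{d}=(d_1,\dots,d_n)$ and $\boldsymbol{k}=(k_1,\dots,k_m)$ nonnegative integer sequences, be a bipartite degree sequence for the bipartition $X=\{x_1,\dots,x_n\}$, $Y=\{y_1,\dots,y_m\}$. Suppose $g,h\in[n]$ satisfy $d_g\geq d_h+2$, and define $\boldsymbol{d}'$ by $d'_g=d_g-1$, $d'_h=d_h+1$ and $d'_i=d_i$ for $i\in[n]\setminus\{g,h\}$. Then \[|\mathcal{B}(\boldsymbol{d},\boldsymbol{k})|\leq|\mathcal{B}(\boldsymbol{d}',\boldsymbol{k})|.\]
   Context: $\mathcal{B}(\boldsymbol{d},\boldsymbol{k})$ denotes the set of all simple bipartite graphs $B$ with the fixed bipartition $X,Y$ (edges only between $X$ and $Y$) such that $\deg_B(x_i)=d_i$ for all $i\in[n]$ and $\deg_B(y_j)=k_j$ for all $j\in[m]$. *)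

(* Defs.v *)
From mathcomp Require Import all_boot.
Set Implicit Arguments. Unset Strict Implicit. Unset Printing Implicit Defensive.

(* A simple bipartite graph with fixed bipartition X = {x_0..x_{n-1}},
   Y = {y_0..y_{m-1}} is identified with its edge set, a subset of
   'I_n * 'I_m (the pair (i,j) is the edge x_i y_j). Simplicity is automatic. *)
Definition bgraph (n m : nat) := {set ('I_n * 'I_m)}.

Definition degX n m (B : bgraph n m) (i : 'I_n) : nat :=
  #|[set j : 'I_m | (i, j) \in B]|.
Definition degY n m (B : bgraph n m) (j : 'I_m) : nat :=
  #|[set i : 'I_n | (i, j) \in B]|.

Definition Bset n m (d : 'I_n -> nat) (k : 'I_m -> nat) : {set bgraph n m} :=
  [set B : bgraph n m | [forall i, degX B i == d i] && [forall j, degY B j == k j]].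

Definition bipartite_degree_seq n m (d : 'I_n -> nat) (k : 'I_m -> nat) : Prop :=
  exists B : bgraph n m, B \in Bset d k.

(* Main.v *)
Require Import Defs.
From mathcomp Require Import all_boot all_order all_algebra perm.
Import Order.TTheory GRing.Theory Num.Theory.
From mathcomp Require Import zify.
Set Implicit Arguments. Unset Strict Implicit. Unset Printing Implicit Defensive.

Definition swapg n m (g h : 'I_n) (B : bgraph n m) (y : 'I_m) : bgraph n m :=
  [set p | if p.2 == y then (tperm g h p.1, p.2) \in B else p \in B].
Definition Aset n m (g h : 'I_n) (B : bgraph n m) : {set 'I_m} :=
  [set y | ((g, y) \in B) && ((h, y) \notin B)].

Lemma swapgK n m (g h : 'I_n) (B : bgraph n m) (y : 'I_m) : swapg g h (swapg g h B y) y = B.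
Proof.
apply/setP => [[i j]]; rewrite !inE /=.
by case: eqP => [->|]; rewrite ?eqxx ?tpermK.
Qed.

Lemma swapg_inj n m (g h : 'I_n) :
  injective (fun p : bgraph n m * 'I_m => (swapg g h p.1 p.2, p.2)).
Proof.
move=> [B y] [B' y'] [e1 e2]; simpl in *; subst y'.
by rewrite -(swapgK g h B y) e1 swapgK.
Qed.

Lemma A_swapg n m (g h : 'I_n) (B : bgraph n m) (y : 'I_m) : g != h ->
  (y \in Aset g h (swapg g h B y)) = (y \in Aset h g B).
Proof.
move=> ne; rewrite !inE /= eqxx tpermL tpermR. by [].
Qed.

Lemma degX_swapg_other n m (g h : 'I_n) (B : bgraph n m) (y : 'I_m) i : i != g -> i != h ->
  degX (swapg g h B y) i = degX B i.
Proof.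
move=> ig ih; rewrite /degX; apply: eq_card => j; rewrite !inE /=.
by case: eqP => // ->; rewrite tpermD // eq_sym.
Qed.

Lemma degY_swapg n m (g h : 'I_n) (B : bgraph n m) (y : 'I_m) j :
  degY (swapg g h B y) j = degY B j.
Proof.
rewrite /degY; case: (eqVneq j y) => [->|ne].
  have -> : [set i | (i, y) \in swapg g h B y] = tperm g h @^-1: [set i | (i, y) \in B].
    by apply/setP => i; rewrite !inE /= eqxx.
  by rewrite card_preimset //; apply: perm_inj.
apply: eq_card => i; rewrite !inE /= (negbTE ne) //.
Qed.

Lemma degX_swapg_g n m (g h : 'I_n) (B : bgraph n m) (y : 'I_m) : g != h ->
  (g, y) \notin B -> (h, y) \in B ->
  degX (swapg g h B y) g = (degX B g).+1 /\ (degX (swapg g h B y) h).+1 = degX B h.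
Proof.
move=> ne ng nh; rewrite /degX; split.
  have -> : [set j | (g, j) \in swapg g h B y] = y |: [set j | (g, j) \in B].
    apply/setP => j; rewrite !inE /= tpermL; case: eqP => [->|] //=.
  by rewrite cardsU1 inE ng.
have -> : [set j | (h, j) \in swapg g h B y] = [set j | (h, j) \in B] :\ y.
  apply/setP => j; rewrite !inE /= tpermR; case: eqP => [->|] //=.
  by rewrite (negbTE ng).
by rewrite (cardsD1 y [set j | (h, j) \in B]) inE nh.
Qed.

Lemma Bset_swapg n m (g h : 'I_n) (d : 'I_n -> nat) (k : 'I_m -> nat)
  (B : bgraph n m) (y : 'I_m) : g != h -> 0 < d g ->
  (g, y) \notin B -> (h, y) \in B ->
  (swapg g h B y \in Bset d k) =
  (B \in Bset (fun i : 'I_n =>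
    if i == g then (d g).-1 else if i == h then (d h).+1 else d i) k).
Proof.
move=> ne dg0 ng nh; have nhg : h != g by rewrite eq_sym.
rewrite !inE.
have -> : [forall j, degY (swapg g h B y) j == k j] = [forall j, degY B j == k j].
  by apply: eq_forallb => j; rewrite degY_swapg.
congr (_ && _).
have [eg eh] := degX_swapg_g ne ng nh.
apply/forallP/forallP => H i.
- case: (eqVneq i g) => [->|ig].
    by move: (H g); rewrite eg => /eqP <-; rewrite eqxx.
  case: (eqVneq i h) => [->|ih].
    by move: (H h) => /eqP Hh; rewrite -eh Hh.
  by move: (H i); rewrite degX_swapg_other // (negbTE ig) (negbTE ih).
- case: (eqVneq i g) => [->|ig].
    move: (H g); rewrite eqxx => /eqP Hg; by rewrite eg Hg prednK.
  case: (eqVneq i h) => [->|ih].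
    move: (H h); rewrite (negbTE nhg) eqxx -eh => /eqP [] ->; by [].
  by move: (H i); rewrite degX_swapg_other // (negbTE ig) (negbTE ih).
Qed.

Lemma card_Aset n m (g h : 'I_n) (d : 'I_n -> nat) (k : 'I_m -> nat)
  (B : bgraph n m) : d h <= d g -> B \in Bset d k ->
  #|Aset g h B| = #|Aset h g B| + (d g - d h).
Proof.
move=> hg; rewrite inE => /andP [/forallP H _].
have eg := eqP (H g); have eh := eqP (H h).
have Eg : #|[set j | (g, j) \in B]| =
  #|[set j | (g, j) \in B] :&: [set j | (h, j) \in B]| + #|Aset g h B|.
  rewrite -(cardsID [set j | (h, j) \in B] [set j | (g, j) \in B]); congr (_ + _).
  by apply: eq_card => j; rewrite !inE andbC.
have Eh : #|[set j | (h, j) \in B]| =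
  #|[set j | (g, j) \in B] :&: [set j | (h, j) \in B]| + #|Aset h g B|.
  rewrite -(cardsID [set j | (g, j) \in B] [set j | (h, j) \in B]) setIC; congr (_ + _).
  by apply: eq_card => j; rewrite !inE andbC.
rewrite -eg -eh /degX Eg Eh in hg *; lia.
Qed.

Lemma card_Aset_swap n m (g h : 'I_n) (B : bgraph n m) (y : 'I_m) :
  #|Aset h g (swapg g h B y)| <= #|Aset h g B| + 1.
Proof.
have sub : Aset h g (swapg g h B y) \subset y |: Aset h g B.
  apply/subsetP => z; rewrite !inE /=.
  case: (eqVneq z y) => [-> //|ne]; by rewrite orFb.
apply: leq_trans (subset_leq_card sub) _.
by rewrite cardsU1 addnC leq_add2l leq_b1.
Qed.

Lemma inner_sum n m (a b : 'I_n) (B : bgraph n m) :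
  (\sum_(y in Aset a b B) (#|Aset a b B|%:R : rat)^-1 =
   if #|Aset a b B| == 0 then 0 else 1)%R.
Proof.
rewrite sumr_const -[LHS]mulr_natr; case: eqP => [-> |ne]; first by rewrite mulr0.
by rewrite mulVf // pnatr_eq0; apply/eqP.
Qed.

Unset Implicit Arguments.

Theorem proposition4p3 (n m : nat) (d : 'I_n -> nat) (k : 'I_m -> nat)
  (g h : 'I_n) :
  bipartite_degree_seq d k ->
  d h + 2 <= d g ->
  let d' := fun i : 'I_n =>
    if i == g then (d g).-1 else if i == h then (d h).+1 else d i in
  #|Bset d k| <= #|Bset d' k|.
Proof.
move=> _ hg /=.
set d' := (fun i : 'I_n => if i == g then _ else _).
have ne : g != h by apply/eqP => E; rewrite E in hg; lia.
have dg0 : 0 < d g by lia.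
have hlg : d h <= d g by lia.
rewrite -(ler_nat rat).
pose w (B : bgraph n m) := (#|Aset g h B|%:R : rat)^-1%R.
pose v (B : bgraph n m) := (#|Aset h g B|%:R : rat)^-1%R.
have E1 : (#|Bset d k|%:R = \sum_(B in Bset d k) \sum_(y in Aset g h B) w B :> rat)%R.
  rewrite -sumr_const; apply: eq_bigr => B HB; rewrite inner_sum.
  by rewrite (card_Aset hlg HB) //; case: eqP => //; lia.
rewrite E1 pair_big_dep (reindex_inj (@swapg_inj n m g h)) /=.
have E2 : forall q : bgraph n m * 'I_m,
   ((swapg g h q.1 q.2 \in Bset d k) && (q.2 \in Aset g h (swapg g h q.1 q.2))) =
   ((q.1 \in Bset d' k) && (q.2 \in Aset h g q.1)).
  move=> [B y] /=; rewrite A_swapg //.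
  case Hy: (y \in Aset h g B); last by rewrite !andbF.
  move: Hy; rewrite inE => /andP [nh ng].
  by rewrite Bset_swapg.
rewrite (eq_bigl _ _ E2).
apply: (@le_trans _ _ (\sum_(q | (q.1 \in Bset d' k) && (q.2 \in Aset h g q.1)) v q.1)%R).
  apply: ler_sum => [[B y]] /= /andP [HB Hy].
  have HBs : swapg g h B y \in Bset d k.
    by move: (E2 (B, y)); rewrite /= HB Hy => /andP [].
  have pos1 : (0 < #|Aset h g B|)%N by apply/card_gt0P; exists y.
  have le1 := card_Aset_swap g h (swapg g h B y) y; rewrite swapgK in le1.
  have le2 := card_Aset hlg HBs.
  rewrite /w /v lef_pV2 ?ler_nat ?posrE ?ltr0n //; first lia.
  lia.
rewrite -(pair_big_dep (fun B => B \in Bset d' k) (fun B y => y \in Aset h g B) (fun B _ => v B)) -sumr_const.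
apply: ler_sum => B _; rewrite inner_sum; by case: eqP.
Qed.
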